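(* Let $\mathcal V$ be a subvariety of $\mathsf V(S_7)$. Then $M_2\notin\mathcal V$ if and only if $\mathcal V$ satisfies the identity $x^2y\approx x^2$.
   Context: $S_7$ is the ai-semiring on $\{\infty,a,1\}$ with $x+x=x$, $x+y=\infty$ for $x\neq y$, and commutative multiplication with $\infty$ a zero, $a\cdot a=\infty$, $a\cdot 1=a$, $1\cdot1=1$. $\mathsf V(S_7)$ is the variety it generates. $M_2$ is the two-element ai-semiring $\{1,\infty\}$ with $1+\infty=\infty$, $x+x=x$, $1\cdot1=1$ and $\infty$ a multiplicative zero. *)

(* Defs.v *)
Record algebra := Algebra {
  carrier :> Type;
  add : carrier -> carrier -> carrier;
  mul : carrier -> carrier -> carrier
}.

Inductive term : Type :=
| Var : nat -> term
| Add : term -> term -> term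
| Mul : term -> term -> term.

Fixpoint eval (A : algebra) (v : nat -> A) (t : term) : A :=
  match t with
  | Var n => v n
  | Add s u => add A (eval A v s) (eval A v u)
  | Mul s u => mul A (eval A v s) (eval A v u)
  end.

Definition holds (A : algebra) (s t : term) : Prop :=
  forall v : nat -> A, eval A v s = eval A v t.

Definition models (A : algebra) (Sigma : term -> term -> Prop) : Prop :=
  forall s t, Sigma s t -> holds A s t.

Inductive S7 : Set := S7inf | S7a | S7one.

Definition S7_add (x y : S7) : S7 :=
  match x, y with
  | S7inf, S7inf => S7inf
  | S7a, S7a => S7a
  | S7one, S7one => S7one
  | _, _ => S7inf
  end.

Definition S7_mul (x y : S7) : S7 :=
  match x, y with
  | S7inf, _ => S7inf
  | _, S7inf => S7inf
  | S7a, S7a => S7inf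
  | S7a, S7one => S7a
  | S7one, S7a => S7a
  | S7one, S7one => S7one
  end.

Definition S7alg : algebra := Algebra S7 S7_add S7_mul.

Inductive M2 : Set := M2one | M2inf.

Definition M2_add (x y : M2) : M2 :=
  match x, y with
  | M2one, M2one => M2one
  | _, _ => M2inf
  end.

Definition M2_mul (x y : M2) : M2 :=
  match x, y with
  | M2one, M2one => M2one
  | _, _ => M2inf
  end.

Definition M2alg : algebra := Algebra M2 M2_add M2_mul.

(** V(S_7) = HSP(S_7) = Mod(Id(S_7)) (Birkhoff): the algebras satisfying
    every identity true in S_7. *)
Definition in_VS7 (A : algebra) : Prop :=
  forall s t, holds S7alg s t -> holds A s t.

Definition x2 : term := Mul (Var 0) (Var 0).
Definition x2y : term := Mul (Mul (Var 0) (Var 0)) (Var 1).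

(* Main.v *)
Require Import Defs.
From Stdlib Require Import Classical Arith Bool.

Fixpoint occurs (z : nat) (r : term) : bool :=
  match r with
  | Var n => Nat.eqb n z
  | Add a b => occurs z a || occurs z b
  | Mul a b => occurs z a || occurs z b
  end.

Fixpoint subst (s : nat -> term) (r : term) : term :=
  match r with
  | Var n => s n
  | Add a b => Add (subst s a) (subst s b)
  | Mul a b => Mul (subst s a) (subst s b)
  end.

Lemma eval_subst A v s r :
  eval A v (subst s r) = eval A (fun n => eval A v (s n)) r.
Proof. induction r; simpl; congruence. Qed.

Lemma eval_ext A v1 v2 r : (forall n, v1 n = v2 n) -> eval A v1 r = eval A v2 r.
Proof. intros H; induction r; simpl; congruence. Qed.

Lemma key (x w : S7) z r :
  (occurs z r = true ->
    eval S7alg (fun n => if Nat.eqb n z then S7_mul (S7_mul x x) w else S7_mul x x) r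
      = S7_mul (S7_mul x x) w \/
    eval S7alg (fun n => if Nat.eqb n z then S7_mul (S7_mul x x) w else S7_mul x x) r
      = S7_mul (S7_mul (S7_mul x x) w) (S7_mul (S7_mul x x) w)) /\
  (occurs z r = false ->
    eval S7alg (fun n => if Nat.eqb n z then S7_mul (S7_mul x x) w else S7_mul x x) r
      = S7_mul x x).
Proof.
  induction r as [n| a IHa b IHb | a IHa b IHb]; simpl.
  - destruct (Nat.eqb n z); split; intros H; try discriminate; auto.
  - destruct IHa as [Ha1 Ha2], IHb as [Hb1 Hb2].
    set (ev := fun n => if Nat.eqb n z then S7_mul (S7_mul x x) w else S7_mul x x) in *.
    change (add S7alg) with S7_add. change (mul S7alg) with S7_mul.
    destruct (eval S7alg ev a) as [| |] eqn:Ea, (eval S7alg ev b) as [| |] eqn:Eb;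
    destruct (occurs z a), (occurs z b); simpl; split; intros H; try discriminate;
    repeat match goal with
    | H : true = true -> _ |- _ => specialize (H eq_refl)
    | H : false = false -> _ |- _ => specialize (H eq_refl)
    end;
    repeat match goal with H : _ \/ _ |- _ => destruct H end;
    destruct x, w; simpl in *; unfold ev in *; simpl in *; auto; try congruence.
  - destruct IHa as [Ha1 Ha2], IHb as [Hb1 Hb2].
    set (ev := fun n => if Nat.eqb n z then S7_mul (S7_mul x x) w else S7_mul x x) in *.
    change (add S7alg) with S7_add. change (mul S7alg) with S7_mul.
    destruct (eval S7alg ev a) as [| |] eqn:Ea, (eval S7alg ev b) as [| |] eqn:Eb;
    destruct (occurs z a), (occurs z b); simpl; split; intros H; try discriminate;
    repeat match goal with
    | H : true = true -> _ |- _ => specialize (H eq_refl)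
    | H : false = false -> _ |- _ => specialize (H eq_refl)
    end;
    repeat match goal with H : _ \/ _ |- _ => destruct H end;
    destruct x, w; simpl in *; unfold ev in *; simpl in *; auto; try congruence.
Qed.

Lemma M2_eval v r :
  eval M2alg v r = M2one <-> (forall n, occurs n r = true -> v n = M2one).
Proof.
  induction r as [m| a IHa b IHb | a IHa b IHb]; simpl.
  - split.
    + intros H n Hn. apply Nat.eqb_eq in Hn. subst; auto.
    + intros H. apply H. apply Nat.eqb_refl.
  - split.
    + intros H. destruct (eval M2alg v a) eqn:Ea, (eval M2alg v b) eqn:Eb;
      simpl in H; try discriminate.
      intros n Hn. apply orb_true_iff in Hn as [Hn|Hn].
      * apply IHa; auto. * apply IHb; auto.
    + intros H. rewrite (proj2 IHa), (proj2 IHb); auto;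
      intros n Hn; apply H; rewrite Hn; auto with bool.
  - split.
    + intros H. destruct (eval M2alg v a) eqn:Ea, (eval M2alg v b) eqn:Eb;
      simpl in H; try discriminate.
      intros n Hn. apply orb_true_iff in Hn as [Hn|Hn].
      * apply IHa; auto. * apply IHb; auto.
    + intros H. rewrite (proj2 IHa), (proj2 IHb); auto;
      intros n Hn; apply H; rewrite Hn; auto with bool.
Qed.

Lemma main_dir A s t z (HA : in_VS7 A) (H : holds A s t)
  (Hs : occurs z s = true) (Ht : occurs z t = false) : holds A x2y x2.
Proof.
  set (sg1 := fun n => if Nat.eqb n z then x2y else x2).
  set (sg2 := fun n => if Nat.eqb n z then Mul x2 (Mul (Var 1) (Var 1)) else x2).
  assert (Hsub : forall sg v, eval A v (subst sg s) = eval A v (subst sg t)).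
  { intros sg v. rewrite !eval_subst. apply H. }
  assert (I1 : forall sg, (sg = sg1 \/ sg = sg2) -> holds S7alg (subst sg t) x2).
  { intros sg Hsg u. rewrite eval_subst.
    destruct Hsg; subst sg.
    - rewrite (eval_ext S7alg _ (fun n : nat => if Nat.eqb n z then S7_mul (S7_mul (u 0) (u 0)) (u 1) else S7_mul (u 0) (u 0))).
      + apply (proj2 (key (u 0) (u 1) z t)); auto.
      + intros n; unfold sg1; destruct (Nat.eqb n z); reflexivity.
    - rewrite (eval_ext S7alg _ (fun n : nat => if Nat.eqb n z then S7_mul (S7_mul (u 0) (u 0)) (S7_mul (u 1) (u 1)) else S7_mul (u 0) (u 0))).
      + apply (proj2 (key (u 0) (S7_mul (u 1) (u 1)) z t)); auto.
      + intros n; unfold sg2; destruct (Nat.eqb n z); reflexivity. }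
  assert (I2 : holds S7alg (Mul (subst sg1 s) (Var 1)) (Mul x2 (Mul (Var 1) (Var 1)))).
  { intros u. simpl. rewrite eval_subst.
    rewrite (eval_ext S7alg _ (fun n : nat => if Nat.eqb n z then S7_mul (S7_mul (u 0) (u 0)) (u 1) else S7_mul (u 0) (u 0))).
    + pose proof (proj1 (key (u 0) (u 1) z s) Hs) as K. simpl in K |- *.
      set (e := eval _ _ s) in *. clearbody e. destruct K as [E|E]; rewrite E;
      destruct (u 0), (u 1); reflexivity.
    + intros n; unfold sg1; destruct (Nat.eqb n z); reflexivity. }
  assert (I3 : holds S7alg (subst sg2 s) (Mul x2 (Mul (Var 1) (Var 1)))).
  { intros u. simpl. rewrite eval_subst.
    rewrite (eval_ext S7alg _ (fun n : nat => if Nat.eqb n z then S7_mul (S7_mul (u 0) (u 0)) (S7_mul (u 1) (u 1)) else S7_mul (u 0) (u 0))).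
    + pose proof (proj1 (key (u 0) (S7_mul (u 1) (u 1)) z s) Hs) as K. simpl in K |- *.
      set (e := eval _ _ s) in *. clearbody e. destruct K as [E|E]; rewrite E;
      destruct (u 0), (u 1); reflexivity.
    + intros n; unfold sg2; destruct (Nat.eqb n z); reflexivity. }
  intros v.
  assert (E2 := HA _ _ I2 v). simpl in E2.
  assert (E3 := HA _ _ I3 v). simpl in E3.
  rewrite Hsub, (HA _ _ (I1 sg1 (or_introl eq_refl)) v) in E2.
  rewrite Hsub, (HA _ _ (I1 sg2 (or_intror eq_refl)) v) in E3.
  unfold x2y, x2 in *. simpl in *. rewrite E2. exact (eq_sym E3).
Qed.

Theorem proposition3p4 (Sigma : term -> term -> Prop)
  (Hsub : forall A : algebra, models A Sigma -> in_VS7 A) :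
  ~ models M2alg Sigma <->
  (forall A : algebra, models A Sigma -> holds A x2y x2).
Proof.
  split.
  - intros HM A HA.
    apply NNPP; intros Hn. apply HM. intros s t Hst.
    apply NNPP; intros Hh. apply Hh.
    assert (Hocc : forall n, occurs n s = occurs n t).
    { intros n. destruct (occurs n s) eqn:E1, (occurs n t) eqn:E2; auto.
      - exfalso. apply Hn. apply (main_dir A s t n (Hsub A HA) (HA s t Hst)); auto.
      - exfalso. apply Hn. apply (main_dir A t s n (Hsub A HA)); auto.
        intros v; symmetry; apply (HA s t Hst). }
    intros v.
    destruct (eval M2alg v s) eqn:Es, (eval M2alg v t) eqn:Et; auto.
    + exfalso. rewrite (proj2 (M2_eval v t)) in Et; [discriminate|].
      intros n Hn2. apply (proj1 (M2_eval v s) Es). rewrite Hocc; auto.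
    + exfalso. rewrite (proj2 (M2_eval v s)) in Es; [discriminate|].
      intros n Hn2. apply (proj1 (M2_eval v t) Et). rewrite <- Hocc; auto.
  - intros H HM. specialize (H M2alg HM (fun n => if Nat.eqb n 0 then M2one else M2inf)).
    simpl in H. discriminate.
Qed.
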